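(* Under the standing setup with $\mathrm{Var}(X_N)>0$, if contextual reinforcement holds ($\delta_W\cdot\delta_B\ge0$), then $D\ge 0$ if and only if $D_{ER}\ge D_{NM}$.
   Context: Let $(X,Y,N)$ be a random triple with $X\in\{0,1\}$, $Y$ real-valued, $N$ taking values in a finite set $\mathcal N$. Write $X_n=\mathbb E[X\mid N=n]$, $X_N=\mathbb E[X\mid N]$, $Y_N=\mathbb E[Y\mid N]$. Assume some $n$ has $\Pr(N=n)>0$ and $X_n\in(0,1)$, and $\mathbb E[Y\mid X=x,N=n]\in[\underline Y,\overline Y]$ whenever $\Pr(X=x,N=n)>0$. $D=\mathbb E[Y\mid X=1]-\mathbb E[Y\mid X=0]$; $\delta_B=\mathbb E[\mathrm{Cov}(Y,X\mid N)]$; $\delta_W=\mathbb E[\mathrm{Cov}(Y,X_N\mid X)]$; $D_{ER}=\mathrm{Cov}(Y_N,X_N)/\mathrm{Var}(X_N)$; $D_{NM}=\mathbb E[X_NY_N]/\mathbb E[X_N]-\mathbb E[(1-X_N)Y_N]/\mathbb E[1-X_N]$. *)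

(* Defs.v *)
From HB Require Import structures.
From mathcomp Require Import all_boot all_order all_algebra.
From mathcomp Require Import all_classical all_reals.
From mathcomp Require Import ereal measure lebesgue_measure lebesgue_integral probability.
Set Implicit Arguments. Unset Strict Implicit. Unset Printing Implicit Defensive.
Import Order.TTheory GRing.Theory Num.Theory.
Local Open Scope classical_set_scope.
Local Open Scope ring_scope.

Section Defs.
Context {d : measure_display} {T : measurableType d} {R : realType}
        (P : probability T R).

Definition pr (A : set T) : R := fine (P A).

Definition Ex (f : T -> R) : R := fine (\int[P]_w (f w)%:E)%E.

Definition cE (f : T -> R) (A : set T) : R :=
  fine (\int[P]_(w in A) (f w)%:E)%E / pr A.

Definition cCov (f g : T -> R) (A : set T) : R :=
  cE (fun w => f w * g w) A - cE f A * cE g A.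

Definition Cov (f g : T -> R) : R :=
  Ex (fun w => f w * g w) - Ex f * Ex g.

Definition Var (f : T -> R) : R := Cov f f.

Variables (nT : finType) (X : T -> bool) (Y : T -> R) (N : T -> nT).

Definition Xr (w : T) : R := (X w)%:R.

Definition Xn (n : nT) : R := cE Xr [set w | N w = n].
Definition Yn (n : nT) : R := cE Y [set w | N w = n].
Definition XN (w : T) : R := Xn (N w).
Definition YN (w : T) : R := Yn (N w).

Definition Dgap : R := cE Y [set w | X w] - cE Y [set w | ~~ X w].

Definition deltaB : R := Ex (fun w => cCov Y Xr [set v | N v = N w]).

Definition deltaW : R := Ex (fun w => cCov Y XN [set v | X v = X w]).

Definition D_ER : R := Cov YN XN / Var XN.

Definition D_NM : R :=
  Ex (fun w => XN w * YN w) / Ex XN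
  - Ex (fun w => (1 - XN w) * YN w) / Ex (fun w => 1 - XN w).

End Defs.

(* Main.v *)
Require Import Defs.
From HB Require Import structures.
From mathcomp Require Import all_boot all_order all_algebra.
From mathcomp Require Import all_classical all_reals.
From mathcomp Require Import ereal measure lebesgue_measure lebesgue_integral probability.
From mathcomp Require Import measurable_realfun numfun.
From mathcomp Require Import ring lra.
Import Order.TTheory GRing.Theory Num.Theory.
Local Open Scope classical_set_scope.
Local Open Scope ring_scope.


Lemma key_alg (R : realFieldType) (q V D C : R) : 0 < V -> V < q ->
  0 <= (q * D - C) * (C - D * V) -> (0 <= D <-> C / q <= C / V).
Proof.
move=> V0 Vq h.
have q0 : 0 < q by lra.
have -> : (C / q <= C / V) = (0 <= C).
  rewrite -subr_ge0.
  have -> : C / V - C / q = C * ((q - V) / (q * V)).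
    by field; rewrite ?gt_eqF.
  by rewrite pmulr_lge0 // divr_gt0 ?mulr_gt0 // subr_gt0.
split=> hD.
  rewrite leNgt; apply/negP => hC.
  have h1 : 0 < q * D - C by nra.
  have h2 : C - D * V < 0 by nra.
  nra.
rewrite leNgt; apply/negP => hd.
have h1 : q * D - C < 0 by nra.
have h2 : 0 < C - D * V by nra.
nra.
Qed.

Lemma final_alg (R : realFieldType) (p K G Sy U H : R) :
  0 < K - p * p -> K < p ->
  0 <= ((H / p - U / p * (K / p)) * p + ((G - H) / (1 - p) - (Sy - U) / (1 - p) * ((p - K) / (1 - p))) * (1 - p)) * (U - G) ->
  (0 <= U / p - (Sy - U) / (1 - p) <->
   G / p - (Sy - G) / (1 - p) <= (G - Sy * p) / (K - p * p)).
Proof.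
move=> hV hK hCR.
have p0 : 0 < p by nra.
have p1 : 0 < 1 - p by nra.
have pn : p != 0 by rewrite gt_eqF.
have p1n : 1 - p != 0 by rewrite gt_eqF.
set D := U / p - (Sy - U) / (1 - p).
set C := G - Sy * p.
have eNM : G / p - (Sy - G) / (1 - p) = C / (p * (1 - p)).
  by rewrite /C; field; rewrite pn p1n.
have eB : U - G = p * (1 - p) * D - C.
  by rewrite /D /C; field; rewrite pn p1n.
have eW : (H / p - U / p * (K / p)) * p + ((G - H) / (1 - p) - (Sy - U) / (1 - p) * ((p - K) / (1 - p))) * (1 - p)
   = C - D * (K - p * p).
  by rewrite /D /C; field; rewrite pn p1n.
rewrite eNM; apply: key_alg => //.
  nra.
by rewrite -eB -eW mulrC.
Qed.

Section Master.
Context {d : measure_display} {T : measurableType d} {R : realType}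
        (P : probability T R) (nT : finType) (X : T -> bool) (N : T -> nT).
Hypothesis mX : measurable [set w | X w].
Hypothesis mN : forall n : nT, measurable [set w | N w = n].

Definition cell (x : bool) (n : nT) : set T := [set w | X w = x /\ N w = n].

Lemma mcell x n : measurable (cell x n).
Proof.
rewrite /cell (_ : [set w | X w = x /\ N w = n] = [set w | X w = x] `&` [set w | N w = n]) //.
apply: measurableI => //.
case: x.
  by rewrite (_ : [set w | X w = true] = [set w | X w]).
rewrite (_ : [set w | X w = false] = ~` [set w | X w]); first exact: measurableC.
apply/seteqP; split => w /=; case: (X w) => //.
Qed.

Lemma cfun_sum (c : bool -> nT -> R) w :
  c (X w) (N w) = \sum_(i : bool * nT) c i.1 i.2 * (\1_(cell i.1 i.2) w : R).
Proof.
rewrite (bigD1 (X w, N w)) //= big1 ?addr0.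
  by rewrite indicE mem_set ?mulr1.
move=> [x n] /= hne; rewrite indicE memNset ?mulr0 //.
move=> [hx hn]; move/eqP: hne; apply; by rewrite hx hn.
Qed.

Lemma mcfun (c : bool -> nT -> R) D :
  measurable_fun D (fun w => c (X w) (N w)).
Proof.
rewrite (_ : (fun w => _) = (fun w => \sum_(i : bool * nT) c i.1 i.2 * (\1_(cell i.1 i.2) w : R))); last first.
  by apply/funext => w; rewrite cfun_sum.
apply: measurable_sum => i.
apply: measurable_funM; first exact: measurable_cst.
exact/measurable_indic/mcell.
Qed.

Lemma master (f g : T -> R) (c : bool -> nT -> R) (Q : bool -> nT -> bool) :
  measurable_fun setT f -> P.-integrable setT (EFin \o f) ->
  (forall w, g w = c (X w) (N w)) ->
  fine (\int[P]_(w in [set w | Q (X w) (N w)]) (f w * g w)%:E)%E =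
  \sum_(i : bool * nT) (if Q i.1 i.2 then c i.1 i.2 * fine (\int[P]_(w in cell i.1 i.2) (f w)%:E)%E else 0).
Proof.
move=> mf iF hg.
pose F (i : bool * nT) := if Q i.1 i.2 then cell i.1 i.2 else set0.
have mF i : measurable (F i) by rewrite /F; case: ifP => _; [exact: mcell|exact: measurable0].
have eqD : [set w | Q (X w) (N w)] = \big[setU/set0]_(i <- enum {: bool * nT}) F i.
  rewrite -bigcup_seq; apply/seteqP; split => w /=.
    move=> hQ; exists (X w, N w); first by rewrite /= mem_enum.
    by rewrite /F /= hQ.
  move=> [[x n] _]; rewrite /F /=; case: ifP => // hQ [hx hn].
  by rewrite hx hn.
rewrite eqD integral_bigsetU_EFin //; last 3 first.
- exact: enum_uniq.
- move=> [x n] [y m] _ _ [w [Fi Fj]]; move: Fi Fj; rewrite /F /=.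
  case: ifP => _ //; case: ifP => _ //.
  by move=> [<- <-] [<- <-].
- rewrite -eqD; apply/measurable_EFinP.
  rewrite (_ : (fun w => f w * g w) = f \* (fun w => c (X w) (N w))); last first.
    by apply/funext => w; rewrite /= hg.
  apply: measurable_funM; last exact: mcfun.
  by apply: measurable_funS mf.
rewrite -big_enum /=.
rewrite (eq_bigr (fun i => (if Q i.1 i.2 then c i.1 i.2 * fine (\int[P]_(w in cell i.1 i.2) (f w)%:E)%E else 0)%:E)); last first.
  move=> [x n] _; rewrite /F /=; case: ifP => hQ; last by rewrite integral_set0.
  have icell : P.-integrable (cell x n) (EFin \o f).
    by apply: (integrableS measurableT (mcell x n)) => //.
  rewrite (eq_integral (fun w => (f w)%:E * (c x n)%:E)%E); last first.
    by move=> w; rewrite inE => -[hx hn]; rewrite hg hx hn EFinM.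
  rewrite integralZr //; first last.
    exact: mcell.
  by rewrite EFinM muleC fineK ?integrable_fin_num // ; exact: mcell.
by rewrite sumEFin.
Qed.

End Master.
Arguments cell {d T nT}.
Arguments mcell {d T nT X N}.
Arguments mcfun {d T R nT X N} mX mN c D.
Arguments master {d T R P nT X N} mX mN {f g} c {Q}.

Lemma sum_cells {R : realType} {nT : finType} (F : bool -> nT -> R) :
  \sum_(i : bool * nT) F i.1 i.2 = \sum_n (F true n + F false n).
Proof. by rewrite -pair_bigA /= big_bool big_split. Qed.

Lemma sum1 {R : realType} {nT : finType} (F : nT -> R) n0 :
  \sum_n (if n == n0 then F n else 0) = F n0.
Proof. by rewrite -big_mkcond big_pred1_eq. Qed.

Section Main.
Context {d : measure_display} {T : measurableType d} {R : realType}
        (P : probability T R) (nT : finType) (X : T -> bool) (Y : T -> R) (N : T -> nT).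
Hypothesis mX : measurable [set w | X w].
Hypothesis mN : forall n : nT, measurable [set w | N w = n].
Hypothesis mY : measurable_fun setT Y.
Hypothesis iY : P.-integrable setT (EFin \o Y).

Definition pi x n := pr P (cell X N x n).
Definition sY x n := fine (\int[P]_(w in cell X N x n) (Y w)%:E)%E.

Lemma setQ (S : set T) (Q : bool -> nT -> bool) :
  (forall w, S w <-> Q (X w) (N w)) -> S = [set w | Q (X w) (N w)].
Proof. by move=> h; apply/seteqP; split => w /= /h. Qed.

Lemma cell1 x n : fine (\int[P]_(w in cell X N x n) (1)%:E)%E = pi x n.
Proof.
have := integral_cst P (mcell mX mN x n) 1%:E.
by rewrite /= mul1e => ->.
Qed.

Lemma M1 (g : T -> R) (c : bool -> nT -> R) (Q : bool -> nT -> bool) :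
  (forall w, g w = c (X w) (N w)) ->
  fine (\int[P]_(w in [set w | Q (X w) (N w)]) (g w)%:E)%E =
  \sum_n ((if Q true n then c true n * pi true n else 0) +
          (if Q false n then c false n * pi false n else 0)).
Proof.
move=> hg.
rewrite (eq_integral (fun w => ((fun _ => 1) w * g w)%:E)); last by move=> w _; rewrite mul1r.
have mc1 : measurable_fun setT (fun _ : T => (1 : R)) by exact: measurable_cst.
have ic1 : P.-integrable setT (EFin \o (fun _ : T => (1 : R))).
  exact: (finite_measure_integrable_cst P 1 measurableT).
rewrite (master mX mN c mc1 ic1 hg).
rewrite (sum_cells (fun x n => if Q x n then c x n * fine (\int[P]_(w in cell X N x n) (1)%:E)%E else 0)).
by apply: eq_bigr => n _; rewrite !cell1.
Qed.

Lemma MY (g : T -> R) (c : bool -> nT -> R) (Q : bool -> nT -> bool) :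
  (forall w, g w = Y w * c (X w) (N w)) ->
  fine (\int[P]_(w in [set w | Q (X w) (N w)]) (g w)%:E)%E =
  \sum_n ((if Q true n then c true n * sY true n else 0) +
          (if Q false n then c false n * sY false n else 0)).
Proof.
move=> hg.
rewrite (eq_integral (fun w => (Y w * (fun w => c (X w) (N w)) w)%:E)); last by move=> w _; rewrite hg.
rewrite (master mX mN c mY iY (g := fun w => c (X w) (N w))) //.
exact: (sum_cells (fun x n => if Q x n then c x n * sY x n else 0)).
Qed.

Lemma ExM (g : T -> R) (c : bool -> nT -> R) :
  (forall w, g w = c (X w) (N w)) ->
  Ex P g = \sum_n (c true n * pi true n + c false n * pi false n).
Proof.
move=> hg; rewrite /Ex (@setQ setT (fun _ _ => true)) //.
by rewrite (M1 _ c (fun _ _ => true) hg).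
Qed.

Lemma mQ (Q : bool -> nT -> bool) : measurable [set w | Q (X w) (N w)].
Proof.
have := mcfun mX mN (fun x n => (Q x n)%:R : R) setT measurableT [set 1] (measurable_set1 1).
rewrite setTI; congr measurable; apply/seteqP; split => w /=.
  by case: (Q _ _) => //= /esym /eqP; rewrite oner_eq0.
by move=> ->.
Qed.

Lemma prQ (Q : bool -> nT -> bool) :
  pr P [set w | Q (X w) (N w)] =
  \sum_n ((if Q true n then pi true n else 0) + (if Q false n then pi false n else 0)).
Proof.
have := integral_cst P (mQ Q) 1%:E.
rewrite /= mul1e /pr => <-.
rewrite (M1 (fun _ => 1) (fun _ _ => 1) Q) //.
by apply: eq_bigr => n _; rewrite !mul1r.
Qed.

Lemma pi_ge0 x n : 0 <= pi x n.
Proof. exact/fine_ge0/measure_ge0. Qed.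

Lemma pi_null x n : pi x n = 0 -> sY x n = 0.
Proof.
move=> h; rewrite /sY null_set_integral //; first exact: mcell.
  apply/measurable_EFinP; apply: measurable_funS mY => //; exact: mcell.
move: h; rewrite /pi /pr => h.
rewrite -[LHS]fineK; first exact: (congr1 EFin h).
exact: (fin_num_measure P _ (mcell mX mN x n)).
Qed.

Local Notation a n := (pi true n).
Local Notation b n := (pi false n).
Local Notation u n := (sY true n).
Local Notation v n := (sY false n).
Local Notation xx n := (a n / (a n + b n)).

Lemma zc n : (a n = 0 /\ b n = 0 /\ u n = 0 /\ v n = 0) \/ (a n + b n != 0).
Proof.
have [h|h] := eqVneq (a n + b n) 0; last by right.
left; have ha := pi_ge0 true n; have hb := pi_ge0 false n.
have a0 : a n = 0 by lra.
have b0 : b n = 0 by lra.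
split; first exact: a0.
split; first exact: b0.
by split; [exact: (pi_null _ _ a0) | exact: (pi_null _ _ b0)].
Qed.

Lemma NnQ n (S : set T) : S = [set w | N w = n] -> S = [set w | (fun _ m => m == n) (X w) (N w)].
Proof. by move=> ->; apply: (@setQ _ (fun _ m => m == n)) => w /=; split => [->|/eqP]. Qed.

Lemma hXnc n : cE P (Xr X) [set w | N w = n] = xx n.
Proof.
rewrite /cE (@NnQ n [set w | N w = n] erefl).
rewrite (M1 (Xr X) (fun x _ => x%:R) (fun _ m => m == n)) // (prQ (fun _ m => m == n)) !big_split /= !sum1.
by rewrite mul1r mul0r addr0.
Qed.

Lemma hXn n : Xn P X N n = xx n.
Proof. exact: hXnc. Qed.

Lemma hYnc n : cE P Y [set w | N w = n] = (u n + v n) / (a n + b n).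
Proof.
rewrite /cE (@NnQ n [set w | N w = n] erefl).
rewrite (MY Y (fun _ _ => 1) (fun _ m => m == n)); last by move=> w; rewrite mulr1.
by rewrite (prQ (fun _ m => m == n)) !big_split /= !sum1 !mul1r.
Qed.

Lemma hYn n : Yn P Y N n = (u n + v n) / (a n + b n).
Proof. exact: hYnc. Qed.

Local Notation p := (\sum_n a n).
Local Notation K := (\sum_n xx n * a n).
Local Notation G := (\sum_n xx n * (u n + v n)).
Local Notation H := (\sum_n xx n * u n).
Local Notation Sy := (\sum_n (u n + v n)).
Local Notation U := (\sum_n u n).

Ltac pt n := let ha := fresh "ha" in let hb := fresh "hb" in
  let hu := fresh "hu" in let hv := fresh "hv" in let hm := fresh "hm" in
  have [[ha [hb [hu hv]]]|hm] := zc n;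
  [rewrite ?ha ?hb ?hu ?hv; ring | field; exact: hm].

Lemma tot : \sum_n (a n + b n) = 1.
Proof.
have := prQ (fun _ _ => true); rewrite /= => <-.
rewrite (_ : [set w | true] = setT); last by apply/seteqP; split.
by rewrite /pr probability_setT.
Qed.

Lemma sb : \sum_n b n = 1 - p.
Proof. by rewrite -tot big_split /=; ring. Qed.

Lemma sv : \sum_n v n = Sy - U.
Proof. by rewrite big_split /=; ring. Qed.

Lemma pN n0 : pr P [set w | N w = n0] = a n0 + b n0.
Proof.
by rewrite (@NnQ n0 [set w | N w = n0] erefl) (prQ (fun _ m => m == n0)) !big_split /= !sum1.
Qed.

Lemma eXN : Ex P (XN P X N) = p.
Proof.
rewrite (ExM (XN P X N) (fun _ n => Xn P X N n)) //.
apply: eq_bigr => n _; rewrite hXn; pt n.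
Qed.

Lemma eXX : Ex P (fun w => XN P X N w * XN P X N w) = K.
Proof.
rewrite (ExM _ (fun _ n => Xn P X N n * Xn P X N n)) //.
apply: eq_bigr => n _; rewrite hXn; pt n.
Qed.

Lemma eYX : Ex P (fun w => YN P Y N w * XN P X N w) = G.
Proof.
rewrite (ExM _ (fun _ n => Yn P Y N n * Xn P X N n)) //.
apply: eq_bigr => n _; rewrite hXn hYn; pt n.
Qed.

Lemma eXY : Ex P (fun w => XN P X N w * YN P Y N w) = G.
Proof.
rewrite (ExM _ (fun _ n => Xn P X N n * Yn P Y N n)) //.
apply: eq_bigr => n _; rewrite hXn hYn; pt n.
Qed.

Lemma eY : Ex P (YN P Y N) = Sy.
Proof.
rewrite (ExM _ (fun _ n => Yn P Y N n)) //.
apply: eq_bigr => n _; rewrite hYn; pt n.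
Qed.

Lemma e1X : Ex P (fun w => 1 - XN P X N w) = 1 - p.
Proof.
rewrite (ExM _ (fun _ n => 1 - Xn P X N n)) // -sb.
apply: eq_bigr => n _; rewrite hXn; pt n.
Qed.

Lemma e1XY : Ex P (fun w => (1 - XN P X N w) * YN P Y N w) = Sy - G.
Proof.
rewrite (ExM _ (fun _ n => (1 - Xn P X N n) * Yn P Y N n)) // -sumrB.
apply: eq_bigr => n _; rewrite hXn hYn; pt n.
Qed.

Lemma XxQ (x0 : bool) : [set v | X v = x0] = [set w | (fun x _ => x == x0) (X w) (N w)].
Proof. by apply: (@setQ _ (fun x _ => x == x0)) => w /=; split => [->|/eqP]. Qed.

Lemma eD : Dgap P X Y = U / p - (Sy - U) / (1 - p).
Proof.
rewrite /Dgap /cE.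
rewrite (@setQ [set w | X w] (fun x _ => x)) //.
rewrite (@setQ [set w | ~~ X w] (fun x _ => ~~ x)) //.
rewrite (MY Y (fun _ _ => 1) (fun x _ => x)); last by move=> w; rewrite mulr1.
rewrite (MY Y (fun _ _ => 1) (fun x _ => ~~ x)); last by move=> w; rewrite mulr1.
rewrite (prQ (fun x _ => x)) (prQ (fun x _ => ~~ x)) /=.
under eq_bigr do rewrite mul1r addr0.
under [X in _ - X / _]eq_bigr do rewrite mul1r add0r.
have e1 : \sum_n (a n + 0) = p by apply: eq_bigr => n _; rewrite addr0.
have e2 : \sum_n (0 + b n) = \sum_n b n by apply: eq_bigr => n _; rewrite add0r.
by rewrite e1 e2 sv sb.
Qed.

Lemma hYXc n : cE P (fun w => Y w * Xr X w) [set w | N w = n] = u n / (a n + b n).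
Proof.
rewrite /cE (@NnQ n [set w | N w = n] erefl).
rewrite (MY (fun w => Y w * Xr X w) (fun x _ => x%:R) (fun _ m => m == n)) //.
by rewrite (prQ (fun _ m => m == n)) !big_split /= !sum1 mul1r mul0r addr0.
Qed.

Lemma eB : deltaB P X Y N = U - G.
Proof.
rewrite /deltaB (ExM _ (fun _ n => cCov P Y (Xr X) [set v | N v = n])) // -sumrB.
apply: eq_bigr => n _; rewrite /cCov hYXc hYnc hXnc; pt n.
Qed.

Lemma hk1 : cCov P Y (XN P X N) [set v | X v = true] = H / p - U / p * (K / p).
Proof.
rewrite /cCov /cE XxQ.
rewrite (MY (fun w => Y w * XN P X N w) (fun _ n => Xn P X N n) (fun x _ => x == true)) //.
rewrite (MY Y (fun _ _ => 1) (fun x _ => x == true)); last by move=> w; rewrite mulr1.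
rewrite (M1 (XN P X N) (fun _ n => Xn P X N n) (fun x _ => x == true)) //.
rewrite (prQ (fun x _ => x == true)) /=.
have -> : \sum_n (Xn P X N n * u n + 0) = H by apply: eq_bigr => n _; rewrite hXn addr0.
have -> : \sum_n (1 * u n + 0) = U by apply: eq_bigr => n _; rewrite mul1r addr0.
have -> : \sum_n (Xn P X N n * a n + 0) = K by apply: eq_bigr => n _; rewrite hXn addr0.
have -> : \sum_n (a n + 0) = p by apply: eq_bigr => n _; rewrite addr0.
by [].
Qed.

Lemma hk0 : cCov P Y (XN P X N) [set v | X v = false] =
  (G - H) / (1 - p) - (Sy - U) / (1 - p) * ((p - K) / (1 - p)).
Proof.
rewrite /cCov /cE XxQ.
rewrite (MY (fun w => Y w * XN P X N w) (fun _ n => Xn P X N n) (fun x _ => x == false)) //.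
rewrite (MY Y (fun _ _ => 1) (fun x _ => x == false)); last by move=> w; rewrite mulr1.
rewrite (M1 (XN P X N) (fun _ n => Xn P X N n) (fun x _ => x == false)) //.
rewrite (prQ (fun x _ => x == false)) /=.
have -> : \sum_n (0 + Xn P X N n * v n) = G - H.
  by rewrite -sumrB; apply: eq_bigr => n _; rewrite hXn; ring.
have -> : \sum_n (0 + 1 * v n) = Sy - U.
  by rewrite -sumrB; apply: eq_bigr => n _; ring.
have -> : \sum_n (0 + Xn P X N n * b n) = p - K.
  by rewrite -sumrB; apply: eq_bigr => n _; rewrite hXn; pt n.
have -> : \sum_n (0 + b n) = 1 - p by rewrite -sb; apply: eq_bigr => n _; rewrite add0r.
by [].
Qed.

Lemma eW : deltaW P X Y N =
  (H / p - U / p * (K / p)) * p +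
  ((G - H) / (1 - p) - (Sy - U) / (1 - p) * ((p - K) / (1 - p))) * (1 - p).
Proof.
rewrite /deltaW (ExM _ (fun x _ => cCov P Y (XN P X N) [set v | X v = x])) //.
by rewrite big_split /= -!mulr_sumr sb hk1 hk0.
Qed.

Lemma Kp (hn : exists n : nT, 0 < pr P [set w | N w = n] /\ 0 < Xn P X N n < 1) : K < p.
Proof.
case: hn => n0 [hm0 /andP [hx0 hx1]].
rewrite pN in hm0; rewrite hXn in hx0 hx1.
rewrite -subr_gt0 -sumrB.
rewrite (eq_bigr (fun n => a n * b n / (a n + b n))); last by move=> n _; pt n.
rewrite (bigD1 n0) //=.
apply: ltr_wpDr; first by apply: sumr_ge0 => n _; apply: divr_ge0; [apply: mulr_ge0|]; rewrite ?addr_ge0 ?pi_ge0.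
have hm : a n0 + b n0 != 0 by rewrite gt_eqF.
have ea : a n0 = xx n0 * (a n0 + b n0) by rewrite divfK.
have ha : 0 < a n0 by rewrite ea mulr_gt0.
have hb : 0 < b n0.
  have : b n0 = (1 - xx n0) * (a n0 + b n0) by rewrite mulrBl mul1r -ea; ring.
  by move=> ->; rewrite mulr_gt0 // subr_gt0.
by rewrite divr_gt0 ?mulr_gt0.
Qed.

End Main.

Theorem corollary3 (d : measure_display) (T : measurableType d) (R : realType)
  (P : probability T R) (nT : finType)
  (X : T -> bool) (Y : T -> R) (N : T -> nT) (Ylo Yhi : R)
  (mX : measurable [set w | X w])
  (mN : forall n : nT, measurable [set w | N w = n])
  (mY : measurable_fun setT Y)
  (iY : P.-integrable setT (EFin \o Y))
  (hn : exists n : nT, 0 < pr P [set w | N w = n] /\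
        0 < Xn P X N n < 1)
  (hbd : forall (x : bool) (n : nT),
        0 < pr P [set w | X w = x /\ N w = n] ->
        Ylo <= cE P Y [set w | X w = x /\ N w = n] <= Yhi)
  (hvar : 0 < Var P (XN P X N))
  (hCR : 0 <= deltaW P X Y N * deltaB P X Y N) :
  0 <= Dgap P X Y <-> D_NM P X Y N <= D_ER P X Y N.
Proof.
have hK := Kp P nT X Y N mX mN mY hn.
move: hvar hCR; rewrite /D_ER /D_NM /Var /Cov.
rewrite (eD P nT X Y N mX mN mY iY) (eW P nT X Y N mX mN mY iY) (eB P nT X Y N mX mN mY iY).
rewrite (eXX P nT X Y N mX mN mY) (eXN P nT X Y N mX mN mY) (eYX P nT X Y N mX mN mY iY).
rewrite (eY P nT X Y N mX mN mY iY) (eXY P nT X Y N mX mN mY iY).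
rewrite (e1XY P nT X Y N mX mN mY iY) (e1X P nT X Y N mX mN mY).
move=> hV hC.
exact: (@final_alg _ _ _ _ _ _ _ hV hK hC).
Qed.
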